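(* Let $\alpha=\exp\left(\frac{2\pi i}{5}\right)$, let $c,x\in\mathbb{C}$, and let $(a_1,A_1),\dots,(a_p,A_p)$ and $(b_1,B_1),\dots,(b_q,B_q)$ be parameter pairs ($a_j,b_j\in\mathbb{C}$, $A_j,B_j$ nonzero reals) such that all Gamma functions involved are well defined and all series involved converge. Then $$\sum_{k=0}^{4}\alpha^{k}\,{}_p\Psi_q\left[\begin{array}{c}(a_1,A_1),\dots,(a_p,A_p);\\(b_1,B_1),\dots,(b_q,B_q);\end{array} c(x\alpha^k)^2\right] =\frac{5c^2x^4\,\Gamma\!\left(\frac35\right)\Gamma\!\left(\frac45\right)\Gamma\!\left(\frac65\right)\Gamma\!\left(\frac75\right)}{2}\;{}_p\Psi_{q+4}\left[\begin{array}{c}(a_1+2A_1,5A_1),\dots,(a_p+2A_p,5A_p);\\ \left(\tfrac35,1\right),\left(\tfrac45,1\right),\left(\tfrac65,1\right),\left(\tfrac75,1\right),(b_1+2B_1,5B_1),\dots,(b_q+2B_q,5B_q);\end{array}\left(\frac{cx^2}{5}\right)^5\right].$$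
   Context: The Fox–Wright function is defined by the series $${}_p\Psi_q\left[\begin{array}{c}(\alpha_1,A_1),\dots,(\alpha_p,A_p);\\(\beta_1,B_1),\dots,(\beta_q,B_q);\end{array}z\right]=\sum_{n=0}^{\infty}\frac{\Gamma(\alpha_1+A_1n)\cdots\Gamma(\alpha_p+A_pn)}{\Gamma(\beta_1+B_1n)\cdots\Gamma(\beta_q+B_qn)}\frac{z^n}{n!},$$ where $\alpha_i,\beta_j\in\mathbb{C}$ and $A_i,B_j$ are nonzero real numbers chosen so that the Gamma products are well defined. Values of parameters and variables for which the expressions do not make sense are excluded. *)

(* Defs.v *)
From Stdlib Require Import Reals List Factorial.
From Coquelicot Require Import Coquelicot.
Import ListNotations.
Open Scope R_scope.

Definition Cexp (z : C) : C :=
  (exp (Re z) * cos (Im z), exp (Re z) * sin (Im z)).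

Definition Clim (u : nat -> C) : C :=
  (real (Lim_seq (fun n => Re (u n))), real (Lim_seq (fun n => Im (u n)))).

(* Euler's (Gauss') limit formula for the complex Gamma function:
   Gamma z = lim_{n->oo} n! n^z / (z (z+1) ... (z+n)),  z not in {0,-1,-2,...}. *)
Definition Gamma_seq (z : C) (n : nat) : C :=
  Cdiv (Cmult (RtoC (INR (fact n))) (Cexp (Cmult z (RtoC (ln (INR n))))))
       (fold_right Cmult (RtoC 1) (map (fun k => Cplus z (RtoC (INR k))) (seq 0 (S n)))).

Definition Gamma (z : C) : C := Clim (Gamma_seq z).

Definition Gamma_pole (z : C) : Prop := exists k : nat, z = RtoC (- INR k).

Definition param := (C * R)%type.

Definition prodC (l : list C) : C := fold_right Cmult (RtoC 1) l.

Definition FW_term (ps qs : list param) (z : C) (n : nat) : C :=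
  Cmult (Cdiv (prodC (map (fun p => Gamma (Cplus (fst p) (RtoC (snd p * INR n)))) ps))
              (prodC (map (fun q => Gamma (Cplus (fst q) (RtoC (snd q * INR n)))) qs)))
        (Cdiv (Cpow z n) (RtoC (INR (fact n)))).

Definition FoxWright (ps qs : list param) (z : C) : C :=
  (Series (fun n => Re (FW_term ps qs z n)), Series (fun n => Im (FW_term ps qs z n))).

Definition FW_params_ok (ps qs : list param) : Prop :=
  (forall p, In p ps -> snd p <> 0 /\ forall n : nat, ~ Gamma_pole (Cplus (fst p) (RtoC (snd p * INR n)))) /\
  (forall q, In q qs -> snd q <> 0 /\ forall n : nat, ~ Gamma_pole (Cplus (fst q) (RtoC (snd q * INR n)))).

Definition FW_converges (ps qs : list param) (z : C) : Prop :=
  ex_series (V := C_NormedModule) (FW_term ps qs z).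

Definition alpha5 : C := Cexp (0, 2 * PI / 5).

Definition shift25 (p : param) : param := (Cplus (fst p) (RtoC (2 * snd p)), 5 * snd p).

(* Main.v *)
Require Import Defs.
From Stdlib Require Import Reals List Lra Lia Factorial.
From Coquelicot Require Import Coquelicot.
Import ListNotations.
Open Scope R_scope.


Fixpoint prodz (z : R) (n : nat) : R :=
  match n with O => z | S m => prodz z m * (z + INR (S m)) end.

Definition gs (z : R) (n : nat) : R := INR (fact n) * exp (z * ln (INR n)) / prodz z n.

Lemma prodz_pos z n : 0 < z -> 0 < prodz z n.
Proof. intros Hz; induction n; cbn [prodz]; auto. apply Rmult_lt_0_compat; auto. pose proof (pos_INR n). rewrite ?S_INR; lra. Qed.

Lemma fold_Cmult_init (l : list C) (a : C) :
  fold_right Cmult a l = (fold_right Cmult (RtoC 1) l * a)%C.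
Proof. induction l; simpl. ring. rewrite IHl. ring. Qed.

Lemma fold_prod_seq z n :
  fold_right Cmult (RtoC 1) (map (fun k => Cplus (RtoC z) (RtoC (INR k))) (seq 0 (S n))) = RtoC (prodz z n).
Proof.
  induction n.
  - simpl. rewrite Cmult_1_r, <- RtoC_plus. f_equal. lra.
  - rewrite seq_S, map_app, fold_right_app.
    rewrite fold_Cmult_init, IHn. cbn [prodz fold_right map]. rewrite Nat.add_0_l.
    rewrite Cmult_1_r, <- RtoC_plus, <- RtoC_mult. reflexivity.
Qed.

Lemma Cexp_RtoC t : Cexp (RtoC t) = RtoC (exp t).
Proof. unfold Cexp, RtoC; simpl. rewrite cos_0, sin_0. f_equal; ring. Qed.

Lemma Gamma_seq_real z n : 0 < z -> Gamma_seq (RtoC z) n = RtoC (gs z n).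
Proof.
  intros Hz. unfold Gamma_seq, gs. rewrite fold_prod_seq.
  rewrite <- RtoC_mult, Cexp_RtoC, <- RtoC_mult, RtoC_div. reflexivity.
  pose proof (prodz_pos z n Hz); lra.
Qed.

Definition Lg (z : R) : R := real (Lim_seq (gs z)).

Lemma Gamma_real z : 0 < z -> Gamma (RtoC z) = RtoC (Lg z).
Proof.
  intros Hz. unfold Gamma, Clim, Lg.
  rewrite (Lim_seq_ext _ (gs z)). 2:{ intros n. rewrite Gamma_seq_real; auto. }
  rewrite (Lim_seq_ext (fun n => Im (Gamma_seq (RtoC z) n)) (fun _ => 0)). 2:{ intros n. rewrite Gamma_seq_real; auto. }
  rewrite Lim_seq_const. reflexivity.
Qed.

Lemma exp_le' a b : a <= b -> exp a <= exp b.
Proof. intros [H|H]. left; apply exp_increasing; auto. subst; lra. Qed.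

Lemma ln_le_sub1 y : 0 < y -> ln y <= y - 1.
Proof. intros Hy. pose proof (exp_ineq1_le (ln y)). rewrite exp_ln in H; lra. Qed.

Lemma ln_diff_bounds n : (1 <= n)%nat ->
  / INR (S n) <= ln (INR (S n)) - ln (INR n) <= / INR n.
Proof.
  intros Hn. assert (H1 : 1 <= INR n) by (apply (le_INR 1); auto).
  rewrite S_INR. assert (P1 : 0 < / (INR n + 1)) by (apply Rinv_0_lt_compat; lra).
  assert (P2 : 0 < / INR n) by (apply Rinv_0_lt_compat; lra). split.
  - assert (Q : 0 < INR n * / (INR n + 1)) by (apply Rmult_lt_0_compat; lra).
    pose proof (ln_le_sub1 _ Q) as H.
    rewrite ln_mult, ln_Rinv in H; try lra.
    assert (INR n * / (INR n + 1) - 1 = - / (INR n + 1)) by (field; lra). lra.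
  - assert (Q : 0 < (INR n + 1) * / INR n) by (apply Rmult_lt_0_compat; lra).
    pose proof (ln_le_sub1 _ Q) as H.
    rewrite ln_mult, ln_Rinv in H; try lra.
    assert ((INR n + 1) * / INR n - 1 = / INR n) by (field; lra). lra.
Qed.

Lemma gs_step z n : 0 < z -> (1 <= n)%nat ->
  gs z (S n) = gs z n * (INR (S n) * exp (z * (ln (INR (S n)) - ln (INR n))) / (z + INR (S n))).
Proof.
  intros Hz Hn. unfold gs. cbn [prodz].
  change (fact (S n)) with (S n * fact n)%nat. rewrite mult_INR.
  replace (z * (ln (INR (S n)) - ln (INR n))) with (z * ln (INR (S n)) + - (z * ln (INR n))) by ring.
  rewrite exp_plus, exp_Ropp.
  pose proof (prodz_pos z n Hz). pose proof (exp_pos (z * ln (INR n))). pose proof (pos_INR (S n)).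
  field. repeat split; lra.
Qed.

Lemma gs_pos z n : 0 < z -> 0 < gs z n.
Proof.
  intros Hz. unfold gs. apply Rmult_lt_0_compat. apply Rmult_lt_0_compat.
  apply lt_0_INR, lt_O_fact. apply exp_pos. apply Rinv_0_lt_compat, prodz_pos; auto.
Qed.

Lemma gs_incr z n : 0 < z -> (1 <= n)%nat -> gs z n <= gs z (S n).
Proof.
  intros Hz Hn. rewrite gs_step; auto.
  destruct (ln_diff_bounds n Hn) as [A1 A2].
  set (A := ln (INR (S n)) - ln (INR n)) in *.
  set (N := INR (S n)) in *.
  assert (HN : 0 < N) by (apply lt_0_INR; lia).
  assert (NA : N * A >= 1). { apply Rmult_le_compat_l with (r := N) in A1; [|lra]. rewrite Rinv_r in A1; lra. }
  pose proof (exp_ineq1_le (z * A)).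
  assert (Hr : 1 <= N * exp (z * A) / (z + N)).
  { unfold Rdiv. apply Rle_trans with ((z + N) * / (z + N)). rewrite Rinv_r; lra.
    apply Rmult_le_compat_r. left; apply Rinv_0_lt_compat; lra. nra. }
  pose proof (gs_pos z n Hz). nra.
Qed.

Lemma gs_dec z n : 0 < z -> (1 <= n)%nat ->
  gs z (S n) * exp (z * (1 + z) / INR (S n)) <= gs z n * exp (z * (1 + z) / INR n).
Proof.
  intros Hz Hn. rewrite gs_step; auto.
  destruct (ln_diff_bounds n Hn) as [A1 A2].
  set (A := ln (INR (S n)) - ln (INR n)) in *.
  assert (Hn1 : 1 <= INR n) by (apply (le_INR 1); auto).
  rewrite S_INR in *. set (m := INR n) in *.
  assert (E1 : exp (z * A) <= exp (z / m)). { apply exp_le'. unfold Rdiv. apply Rmult_le_compat_l; lra. }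
  assert (E2 : (m + 1) / (z + (m + 1)) <= exp (- (z / (z + (m + 1))))).
  { pose proof (exp_ineq1_le (- (z / (z + (m + 1))))).
    replace ((m + 1) / (z + (m + 1))) with (1 + - (z / (z + (m + 1)))) by (field; lra). lra. }
  assert (E3 : z / m + - (z / (z + (m + 1))) + z * (1 + z) / (m + 1) <= z * (1 + z) / m).
  { assert (/ (z + (m + 1)) <= / (m + 1)) by (apply Rinv_le_contravar; lra).
    assert (Eq : z / m + - (z / (z + (m + 1))) + z * (1 + z) / (m + 1) - z * (1 + z) / m
      = z * (1 + z) / m * / (z + (m + 1)) - z * (1 + z) / m * / (m + 1)) by (field; lra).
    assert (0 <= z * (1 + z) / m) by (apply Rmult_le_pos; [nra| left; apply Rinv_0_lt_compat; lra]).
    pose proof (Rmult_le_compat_l _ _ _ H0 H). lra. }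
  pose proof (gs_pos z n Hz) as G.
  rewrite Rmult_assoc. apply Rmult_le_compat_l; [lra|].
  apply Rle_trans with (exp (z / m) * exp (- (z / (z + (m + 1)))) * exp (z * (1 + z) / (m + 1))).
  - replace ((m + 1) * exp (z * A) / (z + (m + 1))) with (exp (z * A) * ((m + 1) / (z + (m + 1)))) by (field; lra).
    apply Rmult_le_compat_r. left; apply exp_pos.
    apply Rmult_le_compat; try lra. left; apply exp_pos. apply Rmult_le_pos; [lra| left; apply Rinv_0_lt_compat; lra].
  - rewrite <- !exp_plus. apply exp_le'. lra.
Qed.

Lemma gs_bound z n : 0 < z -> (1 <= n)%nat -> gs z n <= gs z 1 * exp (z * (1 + z)).
Proof.
  intros Hz Hn. induction n as [|n IH]. lia.
  assert (K0 : 0 <= z * (1 + z)) by nra.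
  assert (Hd : forall k, (1 <= k)%nat -> gs z k <= gs z k * exp (z * (1 + z) / INR k)).
  { intros k Hk. pose proof (gs_pos z k Hz).
    assert (1 <= exp (z * (1 + z) / INR k)).
    { pose proof (exp_ineq1_le (z * (1 + z) / INR k)).
      assert (0 <= z * (1 + z) / INR k). apply Rmult_le_pos; auto. left; apply Rinv_0_lt_compat, lt_0_INR; lia. lra. }
    nra. }
  assert (Hdd : forall k, (1 <= k)%nat -> gs z k * exp (z * (1 + z) / INR k) <= gs z 1 * exp (z * (1 + z))).
  { induction k as [|k IHk]; intros Hk. lia.
    destruct k as [|k]. simpl INR. rewrite Rdiv_1_r. lra.
    eapply Rle_trans. apply gs_dec; auto; lia. apply IHk; lia. }
  eapply Rle_trans. apply Hd; auto. apply Hdd; auto.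
Qed.

Lemma gs_lim z : 0 < z -> is_lim_seq (gs z) (Lg z) /\ 0 < Lg z.
Proof.
  intros Hz.
  assert (Hex : ex_finite_lim_seq (fun n => gs z (S n))).
  { apply ex_finite_lim_seq_incr with (M := gs z 1 * exp (z * (1 + z))).
    intros n; apply gs_incr; auto; lia.
    intros n; apply gs_bound; auto; lia. }
  destruct Hex as [l Hl].
  assert (H : is_lim_seq (gs z) l) by (apply is_lim_seq_incr_1; auto).
  assert (HL : Lg z = l). { unfold Lg. rewrite (is_lim_seq_unique _ _ H). reflexivity. }
  rewrite HL. split; auto.
  assert (Hge : forall n, gs z 1 <= gs z (S n)).
  { induction n. lra. eapply Rle_trans. apply IHn. apply gs_incr; auto; lia. }
  pose proof (is_lim_seq_le _ _ _ _ Hge (is_lim_seq_const (gs z 1)) Hl) as Hle.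
  simpl in Hle. pose proof (gs_pos z 1 Hz). lra.
Qed.

Lemma prodz_shift z n : prodz (z + 1) n * z = prodz z n * (z + 1 + INR n).
Proof.
  induction n. simpl. ring.
  cbn [prodz]. rewrite Rmult_assoc, (Rmult_comm _ z), <- Rmult_assoc, IHn.
  rewrite !S_INR. ring.
Qed.

Lemma gs_shift z n : 0 < z -> (1 <= n)%nat ->
  gs (z + 1) n = gs z n * (z * INR n / (z + 1 + INR n)).
Proof.
  intros Hz Hn. assert (Hn1 : 1 <= INR n) by (apply (le_INR 1); auto).
  unfold gs. rewrite Rmult_plus_distr_r, exp_plus, Rmult_1_l, exp_ln by lra.
  pose proof (prodz_shift z n) as E.
  assert (E' : prodz (z + 1) n = prodz z n * (z + 1 + INR n) / z) by (rewrite <- E; field; lra).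
  rewrite E'. pose proof (prodz_pos z n Hz). field. repeat split; lra.
Qed.

Lemma lim_ratio z : 0 < z -> is_lim_seq (fun n => z * INR n / (z + 1 + INR n)) z.
Proof.
  intros Hz.
  apply is_lim_seq_ext_loc with (u := fun n => z * / (1 + (z + 1) * / INR n)).
  { exists 1%nat. intros n Hn. assert (1 <= INR n) by (apply (le_INR 1); auto). field. split; lra. }
  assert (H0 : is_lim_seq (fun n => / INR n) 0).
  { pose proof (is_lim_seq_inv _ _ is_lim_seq_INR) as H. simpl in H. apply H. discriminate. }
  pose proof (is_lim_seq_plus' _ _ _ _ (is_lim_seq_const 1) (is_lim_seq_mult' _ _ _ _ (is_lim_seq_const (z + 1)) H0)) as H1.
  pose proof (is_lim_seq_inv _ _ H1) as H2. simpl in H2.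
  assert (H3 : is_lim_seq (fun n => / (1 + (z + 1) * / INR n)) (/ (1 + (z + 1) * 0))).
  { apply H2. intros E; injection E; lra. }
  pose proof (is_lim_seq_mult' _ _ _ _ (is_lim_seq_const z) H3) as H4.
  replace (z * / (1 + (z + 1) * 0)) with z in H4 by field. exact H4.
Qed.

Lemma Lg_rec z : 0 < z -> Lg (z + 1) = z * Lg z.
Proof.
  intros Hz. destruct (gs_lim z Hz) as [H1 _]. destruct (gs_lim (z + 1)) as [H2 _]; [lra|].
  pose proof (is_lim_seq_mult' _ _ _ _ H1 (lim_ratio z Hz)) as H3.
  assert (H4 : is_lim_seq (gs (z + 1)) (Lg z * z)).
  { apply is_lim_seq_ext_loc with (2 := H3). exists 1%nat. intros n Hn. rewrite gs_shift; auto. }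
  pose proof (is_lim_seq_unique _ _ H2) as U2. pose proof (is_lim_seq_unique _ _ H4) as U4.
  rewrite U2 in U4. injection U4. intros; lra.
Qed.

Fixpoint poch (r : R) (m : nat) : R :=
  match m with O => 1 | S k => poch r k * (r + INR k) end.

Lemma Lg_poch r m : 0 < r -> Lg (r + INR m) = poch r m * Lg r.
Proof.
  intros Hr. induction m. simpl. rewrite Rplus_0_r. ring.
  rewrite S_INR, <- Rplus_assoc, Lg_rec. rewrite IHm. cbn [poch]. ring.
  pose proof (pos_INR m); lra.
Qed.

Lemma Gamma_poch r m : 0 < r ->
  Gamma (Cplus (RtoC r) (RtoC (1 * INR m))) = Cmult (RtoC (poch r m)) (Gamma (RtoC r)).
Proof.
  intros Hr. rewrite <- RtoC_plus, Rmult_1_l, !Gamma_real; auto.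
  rewrite Lg_poch, RtoC_mult; auto.
  pose proof (pos_INR m); lra.
Qed.

Lemma Gamma_nz r : 0 < r -> Gamma (RtoC r) <> RtoC 0.
Proof.
  intros Hr. rewrite Gamma_real; auto. intros E. injection E. destruct (gs_lim r Hr). lra.
Qed.


Lemma sum_n_re (f : nat -> C) n :
  Re (sum_n (G := C_AbelianMonoid) f n) = sum_n (fun k => Re (f k)) n.
Proof. induction n. rewrite !sum_O. reflexivity. rewrite !sum_Sn, <- IHn. reflexivity. Qed.

Lemma sum_n_im (f : nat -> C) n :
  Im (sum_n (G := C_AbelianMonoid) f n) = sum_n (fun k => Im (f k)) n.
Proof. induction n. rewrite !sum_O. reflexivity. rewrite !sum_Sn, <- IHn. reflexivity. Qed.

Lemma is_series_C_re (f : nat -> C) l :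
  is_series (V := C_NormedModule) f l -> is_series (fun n => Re (f n)) (Re l).
Proof.
  unfold is_series. intros H P [eps HP].
  assert (Hl : locally (T := C_UniformSpace) l (fun y : C => P (Re y))).
  { exists eps. intros y [Hy1 Hy2]. apply HP. exact Hy1. }
  specialize (H _ Hl). destruct H as [N HN]. exists N. intros n Hn.
  specialize (HN n Hn). simpl in HN. rewrite <- sum_n_re. exact HN.
Qed.

Lemma is_series_C_im (f : nat -> C) l :
  is_series (V := C_NormedModule) f l -> is_series (fun n => Im (f n)) (Im l).
Proof.
  unfold is_series. intros H P [eps HP].
  assert (Hl : locally (T := C_UniformSpace) l (fun y : C => P (Im y))).
  { exists eps. intros y [Hy1 Hy2]. apply HP. exact Hy2. }
  specialize (H _ Hl). destruct H as [N HN]. exists N. intros n Hn.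
  specialize (HN n Hn). simpl in HN. rewrite <- sum_n_im. exact HN.
Qed.

Lemma is_series_C_unique (f : nat -> C) l1 l2 :
  is_series (V := C_NormedModule) f l1 -> is_series (V := C_NormedModule) f l2 -> l1 = l2.
Proof.
  intros H1 H2.
  pose proof (is_series_unique _ _ (is_series_C_re _ _ H1)) as A1.
  pose proof (is_series_unique _ _ (is_series_C_re _ _ H2)) as A2.
  pose proof (is_series_unique _ _ (is_series_C_im _ _ H1)) as B1.
  pose proof (is_series_unique _ _ (is_series_C_im _ _ H2)) as B2.
  destruct l1 as [a1 b1], l2 as [a2 b2]. simpl in *. f_equal; congruence.
Qed.

Lemma FW_is ps qs z : FW_converges ps qs z ->
  is_series (V := C_NormedModule) (FW_term ps qs z) (FoxWright ps qs z).
Proof.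
  intros [l Hl]. unfold FoxWright.
  rewrite (is_series_unique _ _ (is_series_C_re _ _ Hl)).
  rewrite (is_series_unique _ _ (is_series_C_im _ _ Hl)).
  destruct l; exact Hl.
Qed.

Lemma mod5_lin m j : ((5 * m + j) mod 5 = j mod 5)%nat.
Proof. rewrite Nat.add_comm, Nat.mul_comm. apply Nat.Div0.mod_add. Qed.

Lemma mod5_next m : (S (5 * m + 2) mod 5 = 3 /\ S (S (5 * m + 2)) mod 5 = 4 /\
  S (S (S (5 * m + 2))) mod 5 = 0 /\ S (S (S (S (5 * m + 2)))) mod 5 = 1)%nat.
Proof.
  replace (S (5 * m + 2)) with (5 * m + 3)%nat by lia.
  replace (S (5 * m + 3)) with (5 * m + 4)%nat by lia.
  replace (S (5 * m + 4)) with (5 * (m + 1) + 0)%nat by lia.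
  replace (S (5 * (m + 1) + 0)) with (5 * (m + 1) + 1)%nat by lia.
  rewrite !mod5_lin. simpl. auto.
Qed.

Lemma is_series_sub5 (u : nat -> C) l :
  (forall n, (n mod 5 <> 2)%nat -> u n = RtoC 0) ->
  is_series (V := C_NormedModule) u l ->
  is_series (V := C_NormedModule) (fun m => u (5 * m + 2)%nat) l.
Proof.
  intros Hz H.
  assert (E : forall m, sum_n (G := C_AbelianMonoid) (fun m => u (5 * m + 2)%nat) m
                     = sum_n (G := C_AbelianMonoid) u (5 * m + 2)%nat).
  { induction m.
    - rewrite sum_O. simpl. rewrite !sum_Sn, sum_O.
      rewrite (Hz 0%nat), (Hz 1%nat) by (simpl; lia).
      unfold plus; simpl. ring.
    - rewrite sum_Sn, IHm.
      replace (5 * S m + 2)%nat with (S (S (S (S (S (5 * m + 2))))))%nat by lia.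
      rewrite !sum_Sn.
      rewrite (Hz (S (5 * m + 2))), (Hz (S (S (5 * m + 2)))), (Hz (S (S (S (5 * m + 2))))),
        (Hz (S (S (S (S (5 * m + 2)))))).
      2-5: destruct (mod5_next m) as (?&?&?&?); congruence.
      replace (S (S (S (S (S (5 * m + 2))))))%nat with (5 * S m + 2)%nat by lia.
      unfold plus; simpl. ring. }
  unfold is_series in *. intros P HP. specialize (H P HP). destruct H as [N HN].
  exists N. intros n Hn. rewrite E. apply HN. lia.
Qed.


Lemma alpha_pow j : (alpha5 ^ j)%C = (cos (INR j * (2 * PI / 5)), sin (INR j * (2 * PI / 5))).
Proof.
  induction j.
  - simpl. rewrite Rmult_0_l, cos_0, sin_0. reflexivity.
  - rewrite Cpow_S, IHj. unfold alpha5, Cexp. simpl Re; simpl Im. rewrite exp_0, !Rmult_1_l.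
    rewrite S_INR, Rmult_plus_distr_r, Rmult_1_l, cos_plus, sin_plus.
    unfold Cmult; simpl. f_equal; ring.
Qed.

Lemma alpha5_5 : (alpha5 ^ 5)%C = RtoC 1.
Proof.
  rewrite alpha_pow. replace (INR 5 * (2 * PI / 5)) with (2 * PI) by (simpl; field).
  rewrite cos_2PI, sin_2PI. reflexivity.
Qed.

Lemma alpha_ne1 j : (1 <= j <= 4)%nat -> (alpha5 ^ j)%C <> RtoC 1.
Proof.
  intros Hj E. rewrite alpha_pow in E. injection E. intros Es Ec.
  pose proof PI_RGT_0.
  assert (j = 1%nat \/ j = 2%nat \/ j = 3%nat \/ j = 4%nat) as [J|[J|[J|J]]] by lia; subst j; simpl INR in Es.
  - pose proof (sin_gt_0 (1 * (2 * PI / 5))). lra.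
  - pose proof (sin_gt_0 ((1 + 1) * (2 * PI / 5))). lra.
  - pose proof (sin_lt_0 ((1 + 1 + 1) * (2 * PI / 5))). lra.
  - pose proof (sin_lt_0 ((1 + 1 + 1 + 1) * (2 * PI / 5))). lra.
Qed.

Lemma geo5 (b : C) : (b ^ 5)%C = RtoC 1 -> b <> RtoC 1 ->
  (RtoC 1 + b + b ^ 2 + b ^ 3 + b ^ 4)%C = RtoC 0.
Proof.
  intros H5 H1.
  assert (Hb : (b - 1)%C <> RtoC 0) by (apply Cminus_eq_contra; auto).
  assert (E : ((b - 1) * (1 + b + b ^ 2 + b ^ 3 + b ^ 4))%C = RtoC 0).
  { replace ((b - 1) * (1 + b + b ^ 2 + b ^ 3 + b ^ 4))%C with (b ^ 5 - 1)%C by ring.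
    rewrite H5. ring. }
  replace (RtoC 1 + b + b ^ 2 + b ^ 3 + b ^ 4)%C with
    (/ (b - 1) * ((b - 1) * (1 + b + b ^ 2 + b ^ 3 + b ^ 4)))%C by (field; auto).
  rewrite E. ring.
Qed.

Lemma mod5_lin_A m j : ((5 * m + j) mod 5 = j mod 5)%nat.
Proof. rewrite Nat.add_comm, Nat.mul_comm. apply Nat.Div0.mod_add. Qed.

Lemma alpha_pow_mod j : (alpha5 ^ j)%C = (alpha5 ^ (j mod 5))%C.
Proof.
  rewrite (Nat.div_mod_eq j 5) at 1. rewrite Cpow_add_r, Cpow_mult_r, alpha5_5, Cpow_1_l. ring.
Qed.

Lemma beta_sum n :
  (RtoC 1 + alpha5 ^ (2 * n + 1) + (alpha5 ^ (2 * n + 1)) ^ 2 + (alpha5 ^ (2 * n + 1)) ^ 3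
     + (alpha5 ^ (2 * n + 1)) ^ 4)%C = if Nat.eqb (n mod 5) 2 then RtoC 5 else RtoC 0.
Proof.
  set (b := (alpha5 ^ (2 * n + 1))%C).
  assert (Hb5 : (b ^ 5)%C = RtoC 1).
  { unfold b. rewrite <- Cpow_mult_r, Nat.mul_comm, Cpow_mult_r, alpha5_5, Cpow_1_l. reflexivity. }
  assert (Hs : (n mod 5 < 5)%nat) by (apply Nat.mod_upper_bound; lia).
  assert (Eb : b = (alpha5 ^ ((2 * (n mod 5) + 1) mod 5))%C).
  { unfold b. rewrite alpha_pow_mod. f_equal.
    rewrite (Nat.div_mod_eq n 5) at 1.
    replace (2 * (5 * (n / 5) + n mod 5) + 1)%nat with (5 * (2 * (n / 5)) + (2 * (n mod 5) + 1))%nat by lia.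
    apply mod5_lin_A. }
  set (s := (n mod 5)%nat) in *. clearbody s b.
  assert (s = 0%nat \/ s = 1%nat \/ s = 2%nat \/ s = 3%nat \/ s = 4%nat) as [E|[E|[E|[E|E]]]] by lia;
    subst s; simpl.
  - apply geo5; auto. rewrite Eb. apply alpha_ne1; simpl; lia.
  - apply geo5; auto. rewrite Eb. apply alpha_ne1; simpl; lia.
  - rewrite Eb. simpl. unfold RtoC, Cplus, Cmult. simpl. f_equal; ring.
  - apply geo5; auto. rewrite Eb. apply alpha_ne1; simpl; lia.
  - apply geo5; auto. rewrite Eb. apply alpha_ne1; simpl; lia.
Qed.


Lemma term_k ps qs c x k n :
  (alpha5 ^ k * FW_term ps qs (c * (x * alpha5 ^ k) ^ 2) n)%C =
  (FW_term ps qs (c * x ^ 2) n * (alpha5 ^ (2 * n + 1)) ^ k)%C.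
Proof.
  unfold FW_term.
  replace (c * (x * alpha5 ^ k) ^ 2)%C with (c * x ^ 2 * (alpha5 ^ k) ^ 2)%C by ring.
  rewrite Cpow_mult_l, <- Cpow_mult_r, <- Cpow_mult_r, <- Cpow_mult_r.
  replace ((2 * n + 1) * k)%nat with (k * (2 * n) + k)%nat by lia.
  rewrite Cpow_add_r. unfold Cdiv. ring.
Qed.

Lemma prodC_app l1 l2 : prodC (l1 ++ l2) = (prodC l1 * prodC l2)%C.
Proof. unfold prodC. rewrite fold_right_app, fold_Cmult_init. reflexivity. Qed.

Lemma map_shift (ps : list param) m :
  map (fun p : C * R => Gamma (fst p + RtoC (snd p * INR m))%C) (map shift25 ps)
  = map (fun p : C * R => Gamma (fst p + RtoC (snd p * INR (5 * m + 2)))%C) ps.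
Proof.
  rewrite map_map. apply map_ext. intros [a A]. unfold shift25; simpl fst; simpl snd.
  f_equal. rewrite <- Cplus_assoc, <- RtoC_plus. f_equal. f_equal.
  rewrite plus_INR, mult_INR. simpl. ring.
Qed.

Lemma Cinv_0 : Cinv (RtoC 0) = RtoC 0.
Proof. unfold Cinv, RtoC; simpl. f_equal; unfold Rdiv; ring. Qed.

Lemma Cinv_mult_gen a b : Cinv (a * b)%C = (Cinv a * Cinv b)%C.
Proof.
  destruct (Ceq_dec a (RtoC 0)) as [Ha|Ha]. subst. rewrite Cmult_0_l, Cinv_0. ring.
  destruct (Ceq_dec b (RtoC 0)) as [Hb|Hb]. subst. rewrite Cmult_0_r, Cinv_0. ring.
  field. auto.
Qed.

Lemma poch_pos r m : 0 < r -> 0 < poch r m.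
Proof. intros Hr. induction m; simpl. lra. apply Rmult_lt_0_compat; auto. pose proof (pos_INR m); lra. Qed.

Lemma fact_id m : INR (fact (5 * m + 2)) =
  2 * 5 ^ (5 * m) * INR (fact m) * poch (3/5) m * poch (4/5) m * poch (6/5) m * poch (7/5) m.
Proof.
  induction m. simpl. ring.
  replace (5 * S m + 2)%nat with (S (S (S (S (S (5 * m + 2))))))%nat by lia.
  replace (5 * S m)%nat with (5 * m + 5)%nat by lia.
  cbn [fact poch]. rewrite !mult_INR, IHm, pow_add.
  rewrite !S_INR, plus_INR, mult_INR. simpl INR. simpl pow. field.
Qed.

Definition extras : list param :=
  [(RtoC (3/5), 1); (RtoC (4/5), 1); (RtoC (6/5), 1); (RtoC (7/5), 1)].

Lemma prodC4 (a b c d : C) : prodC [a; b; c; d] = (a * (b * (c * (d * RtoC 1))))%C.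
Proof. reflexivity. Qed.

Lemma RtoC_nz r : r <> 0 -> RtoC r <> RtoC 0.
Proof. intros H E. injection E. auto. Qed.

Lemma main_id ps qs c x m :
  (FW_term ps qs (c * x ^ 2) (5 * m + 2) * RtoC 5)%C =
  (RtoC 5 * c ^ 2 * x ^ 4
       * Gamma (RtoC (3/5)) * Gamma (RtoC (4/5)) * Gamma (RtoC (6/5)) * Gamma (RtoC (7/5))
       / RtoC 2
   * FW_term (map shift25 ps) (extras ++ map shift25 qs) ((c * x ^ 2 / RtoC 5) ^ 5) m)%C.
Proof.
  unfold FW_term. rewrite map_app, prodC_app, !map_shift.
  set (P := prodC (map (fun p : C * R => Gamma (fst p + RtoC (snd p * INR (5 * m + 2)))%C) ps)).
  set (Q := prodC (map (fun p : C * R => Gamma (fst p + RtoC (snd p * INR (5 * m + 2)))%C) qs)).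
  unfold extras. cbn [map fst snd]. rewrite prodC4.
  rewrite !Gamma_poch by lra.
  unfold Cdiv. rewrite Cinv_mult_gen. set (iQ := Cinv Q).
  rewrite <- Cpow_mult_r, (Cpow_mult_l (c * x ^ 2) (/ RtoC 5)), Cpow_inv, (Cpow_add_r (c * x ^ 2)).
  2: apply RtoC_nz; lra.
  rewrite fact_id. rewrite !RtoC_mult, RtoC_pow.
  set (Y := ((c * x ^ 2) ^ (5 * m))%C).
  pose proof (Gamma_nz (3/5) ltac:(lra)) as G1. pose proof (Gamma_nz (4/5) ltac:(lra)) as G2.
  pose proof (Gamma_nz (6/5) ltac:(lra)) as G3. pose proof (Gamma_nz (7/5) ltac:(lra)) as G4.
  pose proof (poch_pos (3/5) m ltac:(lra)) as p1. pose proof (poch_pos (4/5) m ltac:(lra)) as p2.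
  pose proof (poch_pos (6/5) m ltac:(lra)) as p3. pose proof (poch_pos (7/5) m ltac:(lra)) as p4.
  pose proof (INR_fact_neq_0 m) as Fm.
  assert (F5 : (RtoC 5 ^ (5 * m))%C <> RtoC 0) by (apply Cpow_nz, RtoC_nz; lra).
  field. repeat split; try apply RtoC_nz; try lra; auto.
Qed.

Lemma is_series_Cplus (a b : nat -> C) la lb :
  is_series (V := C_NormedModule) a la -> is_series (V := C_NormedModule) b lb ->
  is_series (V := C_NormedModule) (fun n => (a n + b n)%C) (la + lb)%C.
Proof. intros; apply (is_series_plus (V := C_NormedModule)); auto. Qed.

Lemma is_series_Cscal (k : C) (a : nat -> C) la :
  is_series (V := C_NormedModule) a la ->
  is_series (V := C_NormedModule) (fun n => (k * a n)%C) (k * la)%C.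
Proof. intros; apply (is_series_scal (V := C_NormedModule)); auto. Qed.

Theorem theorem4 (ps qs : list param) (c x : C) :
  FW_params_ok ps qs ->
  FW_params_ok (map shift25 ps)
    ([(RtoC (3/5), 1); (RtoC (4/5), 1); (RtoC (6/5), 1); (RtoC (7/5), 1)] ++ map shift25 qs) ->
  (forall k : nat, (k < 5)%nat ->
     FW_converges ps qs (c * (x * alpha5 ^ k) ^ 2)%C) ->
  FW_converges (map shift25 ps)
    ([(RtoC (3/5), 1); (RtoC (4/5), 1); (RtoC (6/5), 1); (RtoC (7/5), 1)] ++ map shift25 qs)
    ((c * x ^ 2 / RtoC 5) ^ 5)%C ->
  fold_right Cplus (RtoC 0)
    (map (fun k => alpha5 ^ k * FoxWright ps qs (c * (x * alpha5 ^ k) ^ 2))%C (seq 0 5))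
  = (RtoC 5 * c ^ 2 * x ^ 4
       * Gamma (RtoC (3/5)) * Gamma (RtoC (4/5)) * Gamma (RtoC (6/5)) * Gamma (RtoC (7/5))
       / RtoC 2
     * FoxWright (map shift25 ps)
         ([(RtoC (3/5), 1); (RtoC (4/5), 1); (RtoC (6/5), 1); (RtoC (7/5), 1)] ++ map shift25 qs)
         ((c * x ^ 2 / RtoC 5) ^ 5))%C.
Proof.
  intros _ _ Hc Hc2.
  pose proof (fun k Hk => FW_is _ _ _ (Hc k Hk)) as HT.
  cbn [fold_right map seq]. rewrite Cplus_0_r.
  pose proof (is_series_Cplus _ _ _ _ (is_series_Cscal (alpha5 ^ 0) _ _ (HT 0%nat ltac:(lia)))
    (is_series_Cplus _ _ _ _ (is_series_Cscal (alpha5 ^ 1) _ _ (HT 1%nat ltac:(lia)))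
    (is_series_Cplus _ _ _ _ (is_series_Cscal (alpha5 ^ 2) _ _ (HT 2%nat ltac:(lia)))
    (is_series_Cplus _ _ _ _ (is_series_Cscal (alpha5 ^ 3) _ _ (HT 3%nat ltac:(lia)))
      (is_series_Cscal (alpha5 ^ 4) _ _ (HT 4%nat ltac:(lia))))))) as H.
  apply (is_series_ext (V := C_NormedModule) _
    (fun n => FW_term ps qs (c * x ^ 2) n * (if Nat.eqb (n mod 5) 2 then RtoC 5 else RtoC 0))%C) in H.
  2:{ intros n. cbv beta. match goal with |- ?a = ?b => change (@eq C a b) end. rewrite !term_k, <- beta_sum. ring. }
  apply is_series_sub5 in H.
  2:{ intros n Hn. apply Nat.eqb_neq in Hn. rewrite Hn. match goal with |- ?a = ?b => change (@eq C a b) end. ring. }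
  apply (is_series_ext (V := C_NormedModule) _
    (fun m => (RtoC 5 * c ^ 2 * x ^ 4
       * Gamma (RtoC (3/5)) * Gamma (RtoC (4/5)) * Gamma (RtoC (6/5)) * Gamma (RtoC (7/5))
       / RtoC 2 * FW_term (map shift25 ps) (extras ++ map shift25 qs) ((c * x ^ 2 / RtoC 5) ^ 5) m)%C)) in H.
  2:{ intros m. rewrite mod5_lin. simpl Nat.eqb. cbv iota. apply main_id. }
  pose proof (is_series_Cscal (RtoC 5 * c ^ 2 * x ^ 4
       * Gamma (RtoC (3/5)) * Gamma (RtoC (4/5)) * Gamma (RtoC (6/5)) * Gamma (RtoC (7/5))
       / RtoC 2) _ _ (FW_is _ _ _ Hc2)) as H2.
  exact (is_series_C_unique _ _ _ H H2).
Qed.
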